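(* Let $H$ be a nonempty ASC-hypergraph and $M\subseteq H$. Then $M$ is a construct of $H$ if and only if every $M$-antichain misses $H$ and $\bigcup H\in M$.
   Context: A hypergraph is a finite set $H$ of nonempty subsets of some finite set; its carrier is $\bigcup H$. For a family $F$ and set $Y$, $F_Y=\{X\in F\mid X\subseteq Y\}$. A hypergraph partition of $H$ is a partition $\{H_1,\dots,H_n\}$ ($n\ge0$) of the set $H$ with $\{\bigcup H_1,\dots,\bigcup H_n\}$ a partition of $\bigcup H$; $H$ is connected if it has exactly one hypergraph partition; the finest hypergraph partition is the unique one whose blocks are connected. $H$ is atomic if $\{x\}\in H$ for all $x\in\bigcup H$; saturated if $X_1,X_2\in H$ with $X_1\cap X_2\neq\emptyset$ imply $X_1\cup X_2\in H$. An ASC-hypergraph is one that is atomic, saturated and connected. Constructions of an atomic $H$, by induction on $|\bigcup H|$: (0) $\emptyset$ is the only construction of $\emptyset$; (1) if $|\bigcup H|\ge1$, $H$ connected, $x\in\bigcup H$, $K$ a construction of $H_{\bigcup H\setminus\{x\}}$, then $K\cup\{\bigcup H\}$ is a construction of $H$; (2) if $H$ is not connected with finest hypergraph partition $\{H_1,\dots,H_n\}$, $n\ge2$, and $K_i$ is a construction of $H_i$, then $K_1\cup\dots\cup K_n$ is a construction of $H$. A construct of a connected nonempty atomic $H$ is a subset of some construction of $H$ that contains $\bigcup H$. For $M\subseteq H$, an $M$-antichain is a subset $S\subseteq M$ with $|S|\ge2$ such that no member of $S$ is a subset of another member of $S$; it misses $H$ when $\bigcup S\notin H$. *)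

(* Defs.v *)
From mathcomp Require Import all_boot.
Set Implicit Arguments. Unset Strict Implicit. Unset Printing Implicit Defensive.

Section Hypergraphs.
Variable T : finType.
Implicit Types (H K M S : {set {set T}}) (X Y : {set T}) (P : {set {set {set T}}}).

Definition hypergraph H : Prop := set0 \notin H.

Definition carrier H : {set T} := \bigcup_(X in H) X.

Definition restr H Y : {set {set T}} := [set X in H | X \subset Y].

(* hypergraph partition: P is a partition of the set H, and the family of
   carriers {U H_1, ..., U H_n} (indexed by the blocks, hence injectively)
   is a partition of U H *)
Definition hpartition H P : Prop :=
  [/\ partition P H,
      {in P &, injective carrier} &
      partition [set carrier B | B in P] (carrier H)].

Definition connected H : Prop := exists! P, hpartition H P.

Definition atomic H : Prop := forall x, x \in carrier H -> [set x] \in H.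

Definition saturated H : Prop :=
  forall X1 X2, X1 \in H -> X2 \in H -> X1 :&: X2 != set0 -> X1 :|: X2 \in H.

Definition ASC H : Prop := [/\ hypergraph H, atomic H, saturated H & connected H].

Inductive construction : {set {set T}} -> {set {set T}} -> Prop :=
| constr_empty : construction set0 set0
| constr_conn H x K :
    0 < #|carrier H| -> connected H -> x \in carrier H ->
    construction (restr H (carrier H :\ x)) K ->
    construction H (carrier H |: K)
| constr_split H P (Ks : {set {set T}} -> {set {set T}}) :
    ~ connected H ->
    hpartition H P -> (forall B, B \in P -> connected B) -> 2 <= #|P| ->
    (forall B, B \in P -> construction B (Ks B)) ->
    construction H (\bigcup_(B in P) Ks B).

Definition construct H M : Prop :=
  (exists K, construction H K /\ M \subset K) /\ carrier H \in M.

Definition antichain M S : Prop :=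
  [/\ S \subset M, 2 <= #|S| &
      forall X Y, X \in S -> Y \in S -> X \subset Y -> X = Y].

Definition misses H S : Prop := carrier S \notin H.

End Hypergraphs.

(* Main.v *)
From Stdlib Require Import Classical ClassicalEpsilon.
Require Import Defs.
From mathcomp Require Import all_boot.
Set Implicit Arguments. Unset Strict Implicit. Unset Printing Implicit Defensive.

Section Proofs.
Variable T : finType.
Implicit Types (H K M S : {set {set T}}) (X Y : {set T}) (P : {set {set {set T}}}).

Lemma sub_carrier H X : X \in H -> X \subset carrier H.
Proof. by move=> XH; apply: (bigcup_sup X). Qed.

Lemma carrier_sub H Y : (forall X, X \in H -> X \subset Y) -> carrier H \subset Y.
Proof. by move=> h; apply/bigcupsP. Qed.

Lemma carrierS H1 H2 : H1 \subset H2 -> carrier H1 \subset carrier H2.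
Proof.
move=> s; apply: carrier_sub => X XH; apply: sub_carrier; exact: (subsetP s).
Qed.

Lemma carrier_restr_sub H Y : carrier (restr H Y) \subset Y.
Proof. by apply: carrier_sub => X; rewrite inE => /andP[]. Qed.

Lemma carrier_restr_top H X : X \in H -> carrier (restr H X) = X.
Proof.
move=> XH; apply/eqP; rewrite eqEsubset carrier_restr_sub /=.
by apply: sub_carrier; rewrite inE XH subxx.
Qed.

Lemma carrier1 X : carrier [set X] = X.
Proof. exact: cover1. Qed.

Lemma hpart_disj H P B1 B2 : hpartition H P -> B1 \in P -> B2 \in P ->
  B1 != B2 -> [disjoint carrier B1 & carrier B2].
Proof.
case=> _ inj /and3P[_ /trivIsetP tI _] b1 b2 ne.
apply: tI; try by apply: imset_f.
by apply: contra ne => /eqP e; apply/eqP; exact: inj.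
Qed.

Lemma hpart_meet H P B1 B2 x : hpartition H P -> B1 \in P -> B2 \in P ->
  x \in carrier B1 -> x \in carrier B2 -> B1 = B2.
Proof.
move=> hp b1 b2 x1 x2; case: (eqVneq B1 B2) => // ne.
by have := disjointFr (hpart_disj hp b1 b2 ne) x1; rewrite x2.
Qed.

Lemma constr_antichain H K : construction H K ->
  (forall X, X \in K -> X != set0 /\ X \subset carrier H) /\
  (forall S, antichain K S -> carrier S \notin H).
Proof.
elim=> {H K}.
- split => [X|S]; first by rewrite inE.
  case=> sS c2 _; move: sS; rewrite subset0 => /eqP Se.
  by rewrite Se cards0 in c2.
- move=> H x K cpos conn xH _ [IH1 IH2].
  have sub1 : forall X, X \in K -> X \subset carrier H :\ x.
    move=> X XK; case: (IH1 X XK) => _ s; apply: subset_trans s _.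
    exact: carrier_restr_sub.
  have sub2 : forall X, X \in carrier H |: K -> X \subset carrier H.
    move=> X; rewrite in_setU1 => /orP[/eqP->//|XK].
    by apply: subset_trans (sub1 X XK) _; exact: subsetDl.
  split.
  + move=> X XK; split; last exact: sub2.
    move: XK; rewrite in_setU1 => /orP[/eqP->|XK]; first by rewrite -card_gt0.
    by case: (IH1 X XK).
  + move=> S [sS c2 ac].
    have notin : carrier H \notin S.
      apply/negP => cS.
      have : ~~ (S \subset [set carrier H]).
        apply: contraL c2 => /subset_leq_card; rewrite cards1 => h.
        by rewrite -ltnNge ltnS.
      case/subsetPn => Y YS; rewrite inE => neY.
      have := ac Y (carrier H) YS cS (sub2 Y (subsetP sS Y YS)).
      by move=> e; rewrite e eqxx in neY.
    have sSK : S \subset K.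
      apply/subsetP => Y YS; have := subsetP sS Y YS; rewrite in_setU1.
      case/orP => // /eqP e; by rewrite -e YS in notin.
    have := IH2 S (And3 sSK c2 ac); apply: contra => cSH.
    rewrite inE cSH /=; apply: carrier_sub => Y YS; exact: sub1 (subsetP sSK Y YS).
- move=> H P Ks nconn hp conn2 c2 _ IH.
  have cov : cover P = H by case: hp => /and3P[/eqP]. 
  split.
  + move=> X /bigcupP[B BP XB]; case: ((IH B BP).1 X XB) => ne Xs; split=> //.
    apply: subset_trans Xs _; apply: carrierS; rewrite -cov.
    exact: (bigcup_sup B).
  + move=> S [sS c2' ac]; apply/negP => cSH.
    rewrite -cov in cSH; case/bigcupP: cSH => B0 B0P cSB0.
    have sub : S \subset Ks B0.
      apply/subsetP => X XS; have /bigcupP[B BP XB] := subsetP sS X XS.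
      case: ((IH B BP).1 X XB) => /set0Pn[y yX] Xs.
      have XB0 : X \subset carrier B0 := subset_trans (sub_carrier XS) (sub_carrier cSB0).
      have e := hpart_meet hp BP B0P (subsetP Xs y yX) (subsetP XB0 y yX).
      by rewrite -e.
    by have := (IH B0 B0P).2 S (And3 sub c2' ac); rewrite cSB0.
Qed.


Definition maxel H := [set X | maxset (fun Y : {set T} => Y \in H) X].
Definition mpart H := [set restr H X | X in maxel H].

Lemma maxel_in H X : X \in maxel H -> X \in H.
Proof. by rewrite inE => /maxsetp. Qed.

Lemma maxel_sub H : maxel H \subset H.
Proof. by apply/subsetP => X; exact: maxel_in. Qed.

Lemma maxel_max H X Y : X \in maxel H -> Y \in H -> X \subset Y -> Y = X.
Proof. by rewrite inE => mX YH; apply: (maxsetsup mX). Qed.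

Lemma maxel_cover H Y : Y \in H -> exists2 X, X \in maxel H & Y \subset X.
Proof.
move=> YH; case: (@maxset_exists _ (fun Z : {set T} => Z \in H) Y YH) => X mX sYX.
by exists X; rewrite ?inE.
Qed.

Lemma carrier_maxel H : carrier (maxel H) = carrier H.
Proof.
apply/eqP; rewrite eqEsubset carrierS ?maxel_sub //=.
apply: carrier_sub => Y YH; have [X mX sYX] := maxel_cover YH.
exact: subset_trans sYX (sub_carrier mX).
Qed.

Lemma maxel_disj H X1 X2 : saturated H -> X1 \in maxel H -> X2 \in maxel H ->
  X1 != X2 -> X1 :&: X2 = set0.
Proof.
move=> sat m1 m2 ne; apply/eqP; apply: contraNT ne => ne0.
have U := sat _ _ (maxel_in m1) (maxel_in m2) ne0.
have e1 := maxel_max m1 U (subsetUl _ _).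
have e2 := maxel_max m2 U (subsetUr _ _).
by apply/eqP; rewrite -[LHS]e1 e2.
Qed.

Lemma hyp_restr H Y : hypergraph H -> hypergraph (restr H Y).
Proof. by rewrite /hypergraph inE => /negbTE->. Qed.

Lemma sat_restr H Y : saturated H -> saturated (restr H Y).
Proof.
move=> sat X1 X2; rewrite !inE => /andP[h1 s1] /andP[h2 s2] ne.
by rewrite sat // subUset s1 s2.
Qed.

Lemma mpart_hpart H : hypergraph H -> saturated H -> hpartition H (mpart H).
Proof.
move=> h0 sat.
have img : [set carrier B | B in mpart H] = maxel H.
  apply/setP => X; apply/imsetP/idP.
    by case=> B /imsetP[X' mX' ->] ->; rewrite carrier_restr_top // (maxel_in mX').
  move=> mX; exists (restr H X); first exact: imset_f.
  by rewrite carrier_restr_top // (maxel_in mX).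
split.
- apply/and3P; split.
  + apply/eqP/setP => Y; apply/bigcupP/idP.
      by case=> B /imsetP[X mX ->]; rewrite inE => /andP[].
    move=> YH; have [X mX sYX] := maxel_cover YH.
    by exists (restr H X); rewrite ?imset_f // inE YH.
  + apply/trivIsetP => B1 B2 /imsetP[X1 m1 ->] /imsetP[X2 m2 ->] ne.
    have neX : X1 != X2 by apply: contra ne => /eqP->.
    have d := maxel_disj sat m1 m2 neX.
    rewrite -setI_eq0; apply/eqP/setP => Y; rewrite !inE.
    apply/negP => /andP[/andP[YH s1] /andP[_ s2]].
    have : Y \subset X1 :&: X2 by rewrite subsetI s1 s2.
    rewrite d subset0 => /eqP Y0; by move: h0; rewrite /hypergraph -Y0 YH.
  + apply/imsetP => -[X mX] /setP /(_ X); rewrite !inE (maxel_in mX) subxx.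
    by [].
- move=> B1 B2 /imsetP[X1 m1 ->] /imsetP[X2 m2 ->].
  by rewrite !carrier_restr_top ?(maxel_in m1) ?(maxel_in m2) // => ->.
- rewrite img; apply/and3P; split.
  + by rewrite /cover -/(carrier (maxel H)) carrier_maxel.
  + apply/trivIsetP => X1 X2 m1 m2 ne; rewrite -setI_eq0.
    by rewrite (maxel_disj sat m1 m2 ne).
  + by apply: contra h0 => /maxel_in.
Qed.

Lemma carrier_eq0 H : hypergraph H -> (carrier H == set0) = (H == set0).
Proof.
move=> h0; apply/idP/idP => /eqP e; apply/eqP; last by rewrite e /carrier big_set0.
apply/setP => X; rewrite inE; apply/negP => XH.
have := sub_carrier XH; rewrite e subset0 => /eqP X0.
by move: h0; rewrite /hypergraph -X0 XH.
Qed.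

Lemma single_hpart H : hypergraph H -> H != set0 -> hpartition H [set H].
Proof.
move=> h0 Hn0; split.
- apply/and3P; split; [by rewrite cover1 | exact: trivIset1 |].
  by rewrite inE eq_sym.
- by move=> B1 B2; rewrite !inE => /eqP-> /eqP->.
- rewrite imset_set1; apply/and3P; split; [by rewrite cover1 | exact: trivIset1 |].
  by rewrite inE eq_sym carrier_eq0.
Qed.

Lemma top_connected H : hypergraph H -> carrier H \in H -> connected H.
Proof.
move=> h0 cH.
have Hn0 : H != set0 by apply/set0Pn; exists (carrier H).
exists [set H]; split; first exact: single_hpart.
move=> P hp.
have cov : cover P = H by case: hp => /and3P[/eqP].
have cH' : carrier H \in cover P by rewrite cov.
case/bigcupP: cH' => B0 B0P cB0.
have cB0e : carrier B0 = carrier H.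
  apply/eqP; rewrite eqEsubset (sub_carrier cB0) andbT carrierS //.
  by rewrite -cov; exact: (bigcup_sup B0).
have onlyB0 : forall B, B \in P -> B = B0.
  move=> B BP.
  have : carrier B != set0.
    case: hp => _ _ /and3P[_ _ n0]; apply: contra n0 => /eqP <-.
    exact: imset_f.
  case/set0Pn => y yB.
  apply: (hpart_meet hp BP B0P yB); rewrite cB0e.
  apply: subsetP yB; apply: carrierS; rewrite -cov; exact: (bigcup_sup B).
have B0H : B0 = H.
  rewrite -cov; apply/eqP; rewrite eqEsubset (bigcup_sup B0) //=.
  by apply/bigcupsP => B BP; rewrite (onlyB0 B BP).
apply/setP => B; rewrite inE; apply/eqP/idP => [->|BP]; first by rewrite -B0H.
by rewrite (onlyB0 B BP).
Qed.

Lemma connected_top H : hypergraph H -> saturated H -> connected H ->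
  H != set0 -> carrier H \in H.
Proof.
move=> h0 sat [P0 [_ uniq]] Hn0.
have e1 := uniq _ (mpart_hpart h0 sat).
have e2 := uniq _ (single_hpart h0 Hn0).
have : H \in mpart H by rewrite -e1 e2 inE.
case/imsetP => X mX e; rewrite e carrier_restr_top ?(maxel_in mX) //.
by rewrite -e (maxel_in mX).
Qed.


Lemma antichain_sub M1 M2 S : M1 \subset M2 -> antichain M1 S -> antichain M2 S.
Proof. by move=> s [sS c ac]; split=> //; exact: subset_trans sS s. Qed.

Lemma build_empty H M : H = set0 -> M \subset H ->
  exists K, construction H K /\ M \subset K.
Proof. by move=> -> sM; exists set0; split=> //; exact: constr_empty. Qed.

Lemma build n H : #|carrier H| <= n -> hypergraph H -> saturated H ->
  forall M, M \subset H -> (forall S, antichain M S -> carrier S \notin H) ->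
  exists K, construction H K /\ M \subset K.
Proof.
elim: n H => [|n IHn] H cn h0 sat M sMH ac.
  apply: build_empty sMH; apply/eqP; rewrite -carrier_eq0 // -cards_eq0.
  by rewrite -leqn0.
case: (eqVneq H set0) => [H0|Hn0]; first exact: build_empty.
have cn0 : carrier H != set0 by rewrite carrier_eq0.
case: (classic (connected H)) => [conn|nconn].
- have top := connected_top h0 sat conn Hn0.
  set c := carrier H in cn top cn0 *.
  set M' := M :\ c.
  have sM'M : M' \subset M by exact: subsetDl.
  have : ~~ (c \subset carrier M').
    apply/negP => csub.
    have ceq : carrier (maxel M') = c.
      rewrite carrier_maxel; apply/eqP; rewrite eqEsubset csub andbT.
      by apply: carrierS; exact: subset_trans sM'M sMH.
    case: (leqP 2 #|maxel M'|) => [c2|c1].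
      have acS : antichain M (maxel M').
        split=> //; first by apply: subset_trans (maxel_sub _) sM'M.
        move=> X Y mX mY sXY; symmetry; exact: maxel_max mX (maxel_in mY) sXY.
      by have := ac _ acS; rewrite ceq top.
    move: c1; rewrite ltnS leq_eqVlt ltnS leqn0 => /orP[/cards1P[Y eY]|].
      move: ceq; rewrite eY carrier1 => eYc.
      have : Y \in maxel M' by rewrite eY set11.
      by move/maxel_in; rewrite !inE eYc eqxx.
    rewrite cards_eq0 => /eqP e0.
    by move: ceq cn0; rewrite e0 /carrier big_set0 => <-; rewrite eqxx.
  case/subsetPn => x xc xn.
  set H' := restr H (c :\ x).
  have sM'H' : M' \subset H'.
    apply/subsetP => Y YM'; rewrite inE (subsetP sMH Y (subsetP sM'M Y YM')) /=.
    rewrite subsetD1 (subset_trans (sub_carrier (subsetP sMH Y (subsetP sM'M Y YM'))) _) //=.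
    by apply: contra xn => xY; apply/bigcupP; exists Y.
  have cn' : #|carrier H'| <= n.
    rewrite -ltnS; apply: leq_trans cn; apply: proper_card.
    apply: sub_proper_trans (carrier_restr_sub _ _) _; exact: properD1.
  have ac' : forall S, antichain M' S -> carrier S \notin H'.
    move=> S aS; have := ac S (antichain_sub sM'M aS); apply: contra.
    by rewrite inE => /andP[].
  have [K' [cK' sK']] := IHn H' cn' (@hyp_restr H (c :\ x) h0) (@sat_restr H (c :\ x) sat) M' sM'H' ac'.
  exists (c |: K'); split.
    by apply: (constr_conn (x:=x)) => //; rewrite card_gt0.
  apply/subsetP => Y YM; rewrite in_setU1; case: (eqVneq Y c) => //= ne.
  by apply: (subsetP sK'); rewrite in_setD1 ne YM.
- set P := mpart H.
  have hp := mpart_hpart h0 sat.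
  have cov : cover P = H by case: hp => /and3P[/eqP].
  have connB : forall B, B \in P -> connected B.
    move=> B /imsetP[X mX ->]; apply: top_connected; first exact: hyp_restr.
    by rewrite carrier_restr_top ?(maxel_in mX) // inE (maxel_in mX) subxx.
  have c2 : 2 <= #|P|.
    rewrite leqNgt; apply/negP; rewrite ltnS leq_eqVlt ltnS leqn0.
    case/orP => [/cards1P[B eB]|].
      have : B \in P by rewrite eB set11.
      case/imsetP => X mX eBX.
      apply: nconn; apply: top_connected => //.
      have HB : H = B by rewrite -cov eB cover1.
      by rewrite HB eBX carrier_restr_top ?(maxel_in mX) // inE (maxel_in mX) subxx.
    rewrite cards_eq0 => /eqP e0; move: Hn0; by rewrite -cov e0 /cover big_set0 eqxx.
  have ex : forall B, exists K, B \in P -> construction B K /\ M :&: B \subset K.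
    move=> B; case: (boolP (B \in P)) => BP; last by exists set0.
    have [X mX eBX] := imsetP BP.
    have XH := maxel_in mX.
    have [B' B'P neB'] : exists2 B', B' \in P & B' != B.
      have : 0 < #|P :\ B|.
        by move: c2; rewrite (cardsD1 B P) BP add1n ltnS.
      by case/card_gt0P => B'; rewrite in_setD1 => /andP[ne B'P]; exists B'.
    have [X' mX' eBX'] := imsetP B'P.
    have X'H := maxel_in mX'.
    have neX : X != X' by apply: contra neB' => /eqP e; rewrite eBX' eBX e.
    have dX := maxel_disj sat mX mX' neX.
    have cB : carrier B = X by rewrite eBX carrier_restr_top.
    have cnB : #|carrier B| <= n.
      rewrite -ltnS; apply: leq_trans cn; apply: proper_card.
      rewrite cB properE (sub_carrier XH) /=; apply/negP => cX.
      have sX' : X' \subset X := subset_trans (sub_carrier X'H) cX.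
      move: dX; rewrite (setIidPr sX') => X'0.
      by move: h0; rewrite /hypergraph -X'0 X'H.
    have BH : B \subset H by rewrite eBX; apply/subsetP => Y; rewrite inE => /andP[].
    have hB : hypergraph B by rewrite eBX; exact: hyp_restr.
    have sB : saturated B by rewrite eBX; exact: sat_restr.
    have acB : forall S, antichain (M :&: B) S -> carrier S \notin B.
      move=> S aS; have := ac S (antichain_sub (subsetIl _ _) aS); apply: contra.
      exact: (subsetP BH).
    have [K [cK sK]] := IHn B cnB hB sB (M :&: B) (subsetIr _ _) acB.
    by exists K.
  pose Ks B := proj1_sig (constructive_indefinite_description _ (ex B)).
  have Ksp : forall B, B \in P -> construction B (Ks B) /\ M :&: B \subset Ks B.
    move=> B; exact: (proj2_sig (constructive_indefinite_description _ (ex B))).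
  exists (\bigcup_(B in P) Ks B); split.
    by apply: constr_split => // B BP; case: (Ksp B BP).
  apply/subsetP => Y YM.
  have : Y \in cover P by rewrite cov (subsetP sMH).
  case/bigcupP => B BP YB; apply/bigcupP; exists B => //.
  by apply: (subsetP (Ksp B BP).2); rewrite inE YM.
Qed.

End Proofs.

Theorem proposition6p13 (T : finType) (H M : {set {set T}}) :
  ASC H -> H != set0 -> M \subset H ->
  (construct H M <->
   ((forall S, antichain M S -> misses H S) /\ carrier H \in M)).
Proof.
case=> h0 _ sat _ Hn0 sMH; split.
- case=> [[K [cK sMK]] cH]; split=> // S aS.
  have [_ A] := constr_antichain cK; apply: A.
  exact: antichain_sub sMK aS.
- case=> ac cH.
  have [K [cK sMK]] := build (leqnn _) h0 sat sMH ac.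
  by split=> //; exists K.
Qed.
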